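(* Let $a>0$, $T>0$ and $\phi\in\mathcal D[0,T]$. If $(r,g)\in\Pi(\phi)$, then $(r,\Lambda_a(g))\in\Pi(\Lambda_a(\phi))$.
   Context: $\mathcal D[0,T]$ is the space of right-continuous functions $[0,T]\to\mathbb R$ with left limits. $x^+=\max(x,0)$, $\wedge=\min$, $\vee=\max$. For $a>0$ and a real function $f$ on an interval $[0,S]$, $\Lambda_a(f)(t)=f(t)-\sup_{s\in[0,t]}\big[(f(s)-a)^+\wedge\inf_{u\in[s,t]}f(u)\big]$, $t\in[0,S]$. For $\phi\in\mathcal D[0,T]$, set $\phi(0-)=\phi(0)$ and let $G_\phi=\{(t,z)\in[0,T]\times\mathbb R:z\in[\phi(t-)\wedge\phi(t),\phi(t-)\vee\phi(t)]\}$, ordered by $(t_1,z_1)\le(t_2,z_2)$ iff either $t_1<t_2$, or $t_1=t_2$ and $|\phi(t_1-)-z_1|\le|\phi(t_1-)-z_2|$. $\Pi(\phi)$ is the set of continuous maps $(r,g):[0,1]\to G_\phi$ that are onto $G_\phi$ and nondecreasing with respect to this order. *)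

(* Defs.v *)
From Stdlib Require Import Reals Lra Classical ClassicalEpsilon.
Open Scope R_scope.

(* Supremum of a set of reals (chosen least upper bound; 0 if none exists). *)
Definition sup_R (E : R -> Prop) : R :=
  match excluded_middle_informative (exists l, is_lub E l) with
  | left H => proj1_sig (constructive_indefinite_description _ H)
  | right _ => 0
  end.

Definition inf_R (E : R -> Prop) : R := - sup_R (fun x => E (- x)).

Definition Lambda (a : R) (f : R -> R) (t : R) : R :=
  f t - sup_R (fun y => exists s, 0 <= s <= t /\
        y = Rmin (Rmax (f s - a) 0) (inf_R (fun z => exists u, s <= u <= t /\ z = f u))).

Definition is_left_lim (phi : R -> R) (t l : R) : Prop :=
  forall eps, eps > 0 -> exists del, del > 0 /\
    forall s, t - del < s < t -> Rabs (phi s - l) < eps.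

Definition right_cont_at (T : R) (phi : R -> R) (t : R) : Prop :=
  forall eps, eps > 0 -> exists del, del > 0 /\
    forall s, t <= s <= T -> s < t + del -> Rabs (phi s - phi t) < eps.

Definition cadlag (T : R) (phi : R -> R) : Prop :=
  (forall t, 0 <= t < T -> right_cont_at T phi t) /\
  (forall t, 0 < t <= T -> exists l, is_left_lim phi t l).

(* phi(t-), with the convention phi(0-) = phi(0) *)
Definition left_val (phi : R -> R) (t : R) : R :=
  if Req_EM_T t 0 then phi 0 else
  match excluded_middle_informative (exists l, is_left_lim phi t l) with
  | left H => proj1_sig (constructive_indefinite_description _ H)
  | right _ => phi t
  end.

Definition in_G (T : R) (phi : R -> R) (t z : R) : Prop :=
  0 <= t <= T /\
  Rmin (left_val phi t) (phi t) <= z <= Rmax (left_val phi t) (phi t).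

Definition G_le (phi : R -> R) (t1 z1 t2 z2 : R) : Prop :=
  t1 < t2 \/
  (t1 = t2 /\ Rabs (left_val phi t1 - z1) <= Rabs (left_val phi t1 - z2)).

Definition cont_01 (f : R -> R) : Prop :=
  forall s, 0 <= s <= 1 -> forall eps, eps > 0 -> exists del, del > 0 /\
    forall s', 0 <= s' <= 1 -> Rabs (s' - s) < del -> Rabs (f s' - f s) < eps.

Definition in_Pi (T : R) (phi : R -> R) (r g : R -> R) : Prop :=
  cont_01 r /\ cont_01 g /\
  (forall s, 0 <= s <= 1 -> in_G T phi (r s) (g s)) /\
  (forall t z, in_G T phi t z -> exists s, 0 <= s <= 1 /\ r s = t /\ g s = z) /\
  (forall s1 s2, 0 <= s1 <= 1 -> 0 <= s2 <= 1 -> s1 <= s2 ->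
     G_le phi (r s1) (g s1) (r s2) (g s2)).

(* Main.v *)
Require Import Defs.
From Stdlib Require Import Reals Lra Classical ClassicalEpsilon.
Open Scope R_scope.

Ltac mm := unfold Rmax, Rmin in *; repeat (destruct Rle_dec); try lra.
Ltac ab := unfold Rabs in *; repeat (destruct Rcase_abs); try lra.

Lemma sup_R_lub (E : R -> Prop) b :
  (exists x, E x) -> (forall x, E x -> x <= b) -> is_lub E (sup_R E).
Proof.
  intros Hne Hb. unfold sup_R.
  destruct (excluded_middle_informative (exists l, is_lub E l)) as [H|H].
  - exact (proj2_sig (constructive_indefinite_description _ H)).
  - exfalso. apply H. destruct (completeness E) as [m Hm].
    + exists b. intros x Hx. now apply Hb.
    + exact Hne.
    + now exists m.
Qed.

Lemma sup_ub (E : R -> Prop) b x :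
  (forall y, E y -> y <= b) -> E x -> x <= sup_R E.
Proof. intros Hb Hx. destruct (sup_R_lub E b (ex_intro _ x Hx) Hb) as [H _]. now apply H. Qed.

Lemma sup_le (E : R -> Prop) c x0 :
  E x0 -> (forall y, E y -> y <= c) -> sup_R E <= c.
Proof. intros Hx Hb. destruct (sup_R_lub E c (ex_intro _ x0 Hx) Hb) as [_ H]. apply H. intros y Hy; now apply Hb. Qed.

Lemma inf_lb (E : R -> Prop) b x :
  (forall y, E y -> b <= y) -> E x -> inf_R E <= x.
Proof.
  intros Hb Hx. unfold inf_R.
  assert (- x <= sup_R (fun z => E (- z))).
  { apply (sup_ub _ (- b)). intros y Hy. apply Hb in Hy. lra. now rewrite Ropp_involutive. }
  lra.
Qed.

Lemma inf_ge (E : R -> Prop) c x0 :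
  E x0 -> (forall y, E y -> c <= y) -> c <= inf_R E.
Proof.
  intros Hx Hb. unfold inf_R.
  assert (sup_R (fun z => E (- z)) <= - c).
  { apply (sup_le _ _ (- x0)). now rewrite Ropp_involutive. intros y Hy. apply Hb in Hy. lra. }
  lra.
Qed.

Definition IS (f : R -> R) s t := fun z => exists u, s <= u <= t /\ z = f u.
Definition hh a x := Rmax (x - a) 0.
Definition TT a f s t := Rmin (hh a (f s)) (inf_R (IS f s t)).
Definition SS a f t := fun y => exists s, 0 <= s <= t /\ y = TT a f s t.
Definition Sf a f t := sup_R (SS a f t).

Lemma Lambda_eq a f t : Lambda a f t = f t - Sf a f t.
Proof. reflexivity. Qed.

Definition Bnd (f : R -> R) t B := forall u, 0 <= u <= t -> Rabs (f u) <= B.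

Lemma IS_lb f t B s y : Bnd f t B -> 0 <= s -> IS f s t y -> - B <= y.
Proof. intros HB Hs [u [Hu ->]]. assert (Rabs (f u) <= B) by (apply HB; lra). ab. Qed.

Lemma inf_IS_le f t B s u : Bnd f t B -> 0 <= s -> s <= u <= t -> inf_R (IS f s t) <= f u.
Proof. intros. apply (inf_lb _ (- B)). intros y; now apply IS_lb. now exists u. Qed.

Lemma inf_IS_ge f t s c : s <= t -> (forall u, s <= u <= t -> c <= f u) -> c <= inf_R (IS f s t).
Proof. intros Hst H. apply (inf_ge _ _ (f s)). exists s; split; [lra|auto]. intros y [u [Hu ->]]; auto. Qed.

Lemma TT_le_f a f t B s : Bnd f t B -> 0 <= s <= t -> TT a f s t <= f s.
Proof. intros. unfold TT. pose proof (inf_IS_le f t B s s H ltac:(lra) ltac:(lra)). mm. Qed.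

Lemma TT_le_ft a f t B s : Bnd f t B -> 0 <= s <= t -> TT a f s t <= f t.
Proof. intros. unfold TT. pose proof (inf_IS_le f t B s t H ltac:(lra) ltac:(lra)). mm. Qed.

Lemma SS_bnd a f t B y : Bnd f t B -> SS a f t y -> y <= B.
Proof. intros HB [s [Hs ->]]. pose proof (TT_le_f a f t B s HB Hs). assert (Rabs (f s) <= B) by (apply HB; lra). ab. Qed.

Lemma Sf_ge a f t B s : Bnd f t B -> 0 <= s <= t -> TT a f s t <= Sf a f t.
Proof. intros. apply (sup_ub _ B). intros y; now apply SS_bnd. now exists s. Qed.

Lemma Sf_le a f t c : 0 <= t -> (forall s, 0 <= s <= t -> TT a f s t <= c) -> Sf a f t <= c.
Proof. intros Ht H. apply (sup_le _ _ (TT a f t t)). exists t; split; [lra|auto]. intros y [s [Hs ->]]; auto. Qed.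

Lemma inf_single f t B : Bnd f t B -> 0 <= t -> inf_R (IS f t t) = f t.
Proof.
  intros. apply Rle_antisym. apply (inf_IS_le f t B); auto; lra.
  apply inf_IS_ge; [lra|]. intros u Hu. replace u with t by lra. lra.
Qed.

Definition pa a x := Rmin (hh a x) x.

Lemma Sf_ge_pa a f t B : Bnd f t B -> 0 <= t -> pa a (f t) <= Sf a f t.
Proof. intros. pose proof (Sf_ge a f t B t H ltac:(lra)). unfold TT in H1. rewrite (inf_single f t B) in H1; auto. Qed.

Lemma Sf_le_f a f t B : Bnd f t B -> 0 <= t -> Sf a f t <= f t.
Proof. intros. apply Sf_le; auto. intros. apply (TT_le_ft a f t B); auto. Qed.
Lemma Bnd_mono f t t' B : Bnd f t B -> t' <= t -> Bnd f t' B.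
Proof. intros H Ht u Hu. apply H. lra. Qed.

Lemma TT_le_h a f s t : TT a f s t <= hh a (f s).
Proof. unfold TT. apply Rmin_l. Qed.

Lemma hh_mono a x y : x <= y -> hh a x <= hh a y.
Proof. unfold hh; intros; mm. Qed.

Lemma pa_lip a x y : x <= y -> pa a y - pa a x <= y - x.
Proof. unfold pa, hh; intros; mm. Qed.

Lemma pa_mono a x y : x <= y -> pa a x <= pa a y.
Proof. unfold pa, hh; intros; mm. Qed.

Lemma LowerS a f s s2 B c : Bnd f s2 B -> 0 <= s <= s2 ->
  (forall u, s <= u <= s2 -> c <= f u) -> Rmin (Sf a f s) c <= Sf a f s2.
Proof.
  intros HB Hs Hc.
  destruct (Rle_dec c (Sf a f s2)) as [H|H]. { pose proof (Rmin_r (Sf a f s) c). lra. }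
  assert (Sf a f s <= Sf a f s2).
  { apply Sf_le; [lra|]. intros s' Hs'.
    assert (HB' : Bnd f s B) by (eapply Bnd_mono; [eassumption|lra]).
    pose proof (Sf_ge a f s2 B s' HB ltac:(lra)) as H1.
    assert (Rmin (inf_R (IS f s' s)) c <= inf_R (IS f s' s2)).
    { apply inf_IS_ge; [lra|]. intros u Hu.
      destruct (Rle_dec u s).
      - pose proof (inf_IS_le f s B s' u HB' ltac:(lra) ltac:(lra)). pose proof (Rmin_l (inf_R (IS f s' s)) c). lra.
      - pose proof (Hc u ltac:(lra)). pose proof (Rmin_r (inf_R (IS f s' s)) c). lra. }
    unfold TT in *. mm. }
  pose proof (Rmin_l (Sf a f s) c). lra.
Qed.

Lemma UpperS a f s1 s2 B c : Bnd f s2 B -> 0 <= s1 <= s2 ->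
  (forall u, s1 <= u <= s2 -> f u <= c) -> Sf a f s2 <= Rmax (Sf a f s1) (pa a c).
Proof.
  intros HB Hs Hc. apply Sf_le; [lra|]. intros s' Hs'.
  assert (HB' : Bnd f s1 B) by (eapply Bnd_mono; [eassumption|lra]).
  destruct (Rle_dec s' s1).
  - assert (inf_R (IS f s' s2) <= inf_R (IS f s' s1)).
    { apply inf_IS_ge; [lra|]. intros u Hu. apply (inf_IS_le f s2 B); auto; lra. }
    pose proof (Sf_ge a f s1 B s' HB' ltac:(lra)).
    assert (TT a f s' s2 <= TT a f s' s1) by (unfold TT; mm).
    pose proof (Rmax_l (Sf a f s1) (pa a c)). lra.
  - pose proof (TT_le_h a f s' s2). pose proof (TT_le_ft a f s2 B s' HB ltac:(lra)).
    pose proof (hh_mono a (f s') c (Hc s' ltac:(lra))). pose proof (Hc s2 ltac:(lra)).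
    pose proof (Rmax_r (Sf a f s1) (pa a c)).
    assert (TT a f s' s2 <= pa a c) by (unfold pa; mm). lra.
Qed.

Lemma Mono_up a f s s2 B : Bnd f s2 B -> 0 <= s <= s2 ->
  (forall u, s <= u <= s2 -> f u <= f s2) -> Lambda a f s <= Lambda a f s2.
Proof.
  intros HB Hs Hc. rewrite !Lambda_eq.
  pose proof (UpperS a f s s2 B (f s2) HB Hs Hc).
  assert (HB' : Bnd f s B) by (eapply Bnd_mono; [eassumption|lra]).
  pose proof (Sf_ge_pa a f s B HB' ltac:(lra)).
  pose proof (pa_lip a (f s) (f s2) (Hc s ltac:(lra))).
  pose proof (Hc s ltac:(lra)). mm.
Qed.

Lemma Mono_down a f s s2 B : Bnd f s2 B -> 0 <= s <= s2 ->
  (forall u, s <= u <= s2 -> f s2 <= f u) -> Lambda a f s2 <= Lambda a f s.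
Proof.
  intros HB Hs Hc. rewrite !Lambda_eq.
  pose proof (LowerS a f s s2 B (f s2) HB Hs Hc).
  assert (HB' : Bnd f s B) by (eapply Bnd_mono; [eassumption|lra]).
  pose proof (Sf_le_f a f s B HB' ltac:(lra)).
  pose proof (Hc s ltac:(lra)). mm.
Qed.

Lemma Lip_S a f s1 s2 B w : Bnd f s2 B -> 0 <= s1 <= s2 -> 0 <= w ->
  (forall u, s1 <= u <= s2 -> Rabs (f u - f s1) <= w) -> Rabs (Sf a f s2 - Sf a f s1) <= w.
Proof.
  intros HB Hs Hw Hc.
  assert (HB' : Bnd f s1 B) by (eapply Bnd_mono; [eassumption|lra]).
  pose proof (LowerS a f s1 s2 B (f s1 - w) HB Hs ltac:(intros u Hu; specialize (Hc u Hu); ab)).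
  pose proof (UpperS a f s1 s2 B (f s1 + w) HB Hs ltac:(intros u Hu; specialize (Hc u Hu); ab)).
  pose proof (Sf_le_f a f s1 B HB' ltac:(lra)).
  pose proof (Sf_ge_pa a f s1 B HB' ltac:(lra)).
  pose proof (pa_lip a (f s1) (f s1 + w) ltac:(lra)).
  mm; ab.
Qed.

Lemma Lambda_cont a f B : cont_01 f -> Bnd f 1 B -> cont_01 (Lambda a f).
Proof.
  intros Hf HB s Hs eps Heps.
  destruct (Hf s Hs (eps / 8) ltac:(lra)) as [del [Hdel Hd]].
  exists del; split; auto. intros s' Hs' Hss'.
  assert (Hall : forall u, Rmin s s' <= u <= Rmax s s' -> Rabs (f u - f s) < eps / 8).
  { intros u Hu. apply Hd; mm; ab. }
  set (lo := Rmin s s') in *. set (hi := Rmax s s') in *.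
  assert (Hlo : 0 <= lo /\ lo <= hi /\ hi <= 1) by (unfold lo, hi; mm).
  assert (Hw : forall u, lo <= u <= hi -> Rabs (f u - f lo) <= eps / 4).
  { intros u Hu. pose proof (Hall u Hu). pose proof (Hall lo ltac:(lra)). ab. }
  pose proof (Lip_S a f lo hi B (eps/4) ltac:(eapply Bnd_mono; [eassumption|lra]) ltac:(lra) ltac:(lra) Hw).
  pose proof (Hw hi ltac:(lra)).
  rewrite !Lambda_eq.
  assert (Hor : (lo = s /\ hi = s') \/ (lo = s' /\ hi = s)) by (unfold lo, hi; mm).
  destruct Hor as [[E1 E2]|[E1 E2]]; rewrite <- E1, <- E2 in *; ab.
Qed.
Definition cl x := Rmax 0 (Rmin 1 x).

Lemma cl_lip x y : Rabs (cl y - cl x) <= Rabs (y - x).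
Proof. unfold cl; mm; ab. Qed.

Lemma cl_rng x : 0 <= cl x <= 1.
Proof. unfold cl; mm. Qed.

Lemma cl_id x : 0 <= x <= 1 -> cl x = x.
Proof. unfold cl; intros; mm. Qed.

Lemma cont_cl f : cont_01 f -> continuity (fun y => f (cl y)).
Proof.
  intros Hf x. unfold continuity_pt, continue_in, limit1_in, limit_in.
  intros eps Heps. destruct (Hf (cl x) (cl_rng x) eps Heps) as [del [Hdel Hd]].
  exists del; split; auto. intros y [_ Hy]. simpl in *. unfold R_dist in *.
  apply Hd. apply cl_rng. pose proof (cl_lip x y). lra.
Qed.

Lemma gbound g : cont_01 g -> exists B, Bnd g 1 B.
Proof.
  intros Hg. pose proof (cont_cl g Hg) as Hc.
  destruct (continuity_ab_maj (fun y => g (cl y)) 0 1 ltac:(lra) (fun c _ => Hc c)) as [M [HM _]].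
  destruct (continuity_ab_min (fun y => g (cl y)) 0 1 ltac:(lra) (fun c _ => Hc c)) as [m [Hm _]].
  exists (Rmax (Rabs (g (cl M))) (Rabs (g (cl m)))).
  intros u Hu. specialize (HM u Hu). specialize (Hm u Hu). simpl in *. rewrite (cl_id u Hu) in HM, Hm.
  mm; ab.
Qed.


Lemma r_mono T phi r g s1 s2 : in_Pi T phi r g -> 0 <= s1 -> s1 <= s2 -> s2 <= 1 -> r s1 <= r s2.
Proof.
  intros (_ & _ & _ & _ & Hm) H1 H2 H3.
  destruct (Hm s1 s2 ltac:(lra) ltac:(lra) H2) as [H|[H _]]; lra.
Qed.

Lemma r_lt T phi r g s1 s2 : in_Pi T phi r g -> 0 <= s1 <= 1 -> 0 <= s2 <= 1 -> r s1 < r s2 -> s1 < s2.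
Proof.
  intros HP H1 H2 H. destruct (Rlt_le_dec s1 s2) as [|Hle]; auto.
  pose proof (r_mono T phi r g s2 s1 HP ltac:(lra) Hle ltac:(lra)). lra.
Qed.

Lemma r_rng T phi r g s : in_Pi T phi r g -> 0 <= s <= 1 -> 0 <= r s <= T.
Proof. intros (_ & _ & Hin & _) Hs. destruct (Hin s Hs) as [H _]. exact H. Qed.

Lemma hit T phi r g t : in_Pi T phi r g -> 0 <= t <= T ->
  exists s, 0 <= s <= 1 /\ r s = t /\ g s = phi t.
Proof.
  intros (_ & _ & _ & Hs & _) Ht. destruct (Hs t (phi t)) as [s [H1 [H2 H3]]].
  { split; auto. split; [apply Rmin_r | apply Rmax_r]. }
  exists s; auto.
Qed.

Lemma between T phi r g s : in_Pi T phi r g -> 0 <= s <= 1 ->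
  Rmin (left_val phi (r s)) (phi (r s)) <= g s <= Rmax (left_val phi (r s)) (phi (r s)).
Proof. intros (_ & _ & Hin & _) Hs. destruct (Hin s Hs) as [_ H]. exact H. Qed.

Lemma fib_ord T phi r g s1 s2 : in_Pi T phi r g -> 0 <= s1 -> s1 <= s2 -> s2 <= 1 -> r s1 = r s2 ->
  Rabs (left_val phi (r s1) - g s1) <= Rabs (left_val phi (r s1) - g s2).
Proof.
  intros (_ & _ & _ & _ & Hm) H1 H2 H3 He.
  destruct (Hm s1 s2 ltac:(lra) ltac:(lra) H2) as [H|[_ H]]; lra.
Qed.

Lemma after_hit T phi r g sh s : in_Pi T phi r g -> 0 <= sh -> sh <= s -> s <= 1 -> r s = r sh ->
  g sh = phi (r sh) -> g s = phi (r s).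
Proof.
  intros HP H1 H2 H3 He Hh.
  pose proof (fib_ord T phi r g sh s HP H1 H2 H3 (eq_sym He)).
  pose proof (between T phi r g s HP ltac:(lra)). rewrite He in *. rewrite Hh in *.
  set (L := left_val phi (r sh)) in *. mm; ab.
Qed.

Lemma lv0 phi : left_val phi 0 = phi 0.
Proof. unfold left_val. destruct (Req_EM_T 0 0); [reflexivity|lra]. Qed.

Lemma lv_lim f t : t <> 0 -> (exists l, is_left_lim f t l) -> is_left_lim f t (left_val f t).
Proof.
  intros Ht He. unfold left_val. destruct (Req_EM_T t 0); [lra|].
  destruct (excluded_middle_informative (exists l, is_left_lim f t l)) as [H|H]; [|tauto].
  exact (proj2_sig (constructive_indefinite_description _ H)).
Qed.

Lemma lim_ge f t t' L m : is_left_lim f t L -> t' < t -> (forall s, t' <= s < t -> m <= f s) -> m <= L.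
Proof.
  intros HL Ht Hm. destruct (Rle_dec m L) as [|Hn]; auto. exfalso.
  destruct (HL (m - L) ltac:(lra)) as [d [Hd Hs]].
  set (s := Rmax t' (t - d / 2)).
  assert (t' <= s < t /\ t - d < s) by (unfold s; mm).
  specialize (Hs s ltac:(lra)). specialize (Hm s ltac:(lra)). ab.
Qed.

Lemma lim_unique f t l1 l2 : is_left_lim f t l1 -> is_left_lim f t l2 -> l1 = l2.
Proof.
  intros H1 H2. destruct (Req_dec l1 l2) as [|Hn]; auto. exfalso.
  assert (He : Rabs (l1 - l2) > 0) by (apply Rabs_pos_lt; lra).
  destruct (H1 (Rabs (l1 - l2) / 2) ltac:(lra)) as [d1 [Hd1 Hs1]].
  destruct (H2 (Rabs (l1 - l2) / 2) ltac:(lra)) as [d2 [Hd2 Hs2]].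
  set (s := t - Rmin d1 d2 / 2).
  assert (t - d1 < s < t /\ t - d2 < s < t) by (unfold s; mm).
  specialize (Hs1 s ltac:(lra)). specialize (Hs2 s ltac:(lra)). ab.
Qed.

Lemma hh_lip a x e : 0 <= e -> hh a x - e <= hh a (x - e).
Proof. unfold hh; intros; mm. Qed.
Lemma phi_bnd T phi r g B : in_Pi T phi r g -> Bnd g 1 B -> Bnd phi T B.
Proof.
  intros HP HB u Hu. destruct (hit T phi r g u HP Hu) as [s [Hs [_ Hg]]].
  rewrite <- Hg. apply HB. lra.
Qed.

Lemma hit_le T phi r g t s tau : in_Pi T phi r g -> 0 <= s <= 1 -> r s = t -> g s = phi t ->
  0 <= tau <= t -> exists u, 0 <= u <= s /\ r u = tau /\ g u = phi tau.
Proof.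
  intros HP Hs Hr Hg Ht.
  assert (t <= T) by (pose proof (r_rng T phi r g s HP Hs); lra).
  destruct (hit T phi r g tau HP ltac:(lra)) as [s1 [Hs1 [Hr1 Hg1]]].
  destruct (Rle_dec s1 s).
  - exists s1. repeat split; auto; lra.
  - pose proof (r_mono T phi r g s s1 HP ltac:(lra) ltac:(lra) ltac:(lra)).
    exists s. repeat split; try lra. replace tau with t by lra. exact Hg.
Qed.

Lemma lvlim_cad T phi t : cadlag T phi -> 0 < t <= T -> is_left_lim phi t (left_val phi t).
Proof. intros [_ Hc] Ht. apply lv_lim; [lra|]. apply Hc; auto. Qed.

Lemma key_I a T phi r g B t s :
  cadlag T phi -> in_Pi T phi r g -> Bnd g 1 B -> 0 <= t <= T -> 0 <= s <= 1 -> r s = t -> g s = phi t ->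
  Sf a phi t = Sf a g s.
Proof.
  intros Hcad HP HB Ht Hs Hr Hg.
  assert (HBp : Bnd phi t B) by (eapply Bnd_mono; [eapply phi_bnd; eauto|lra]).
  assert (HBg : Bnd g s B) by (eapply Bnd_mono; [eassumption|lra]).
  apply Rle_antisym.
  -
    apply Sf_le; [lra|]. intros t' Ht'.
    destruct (hit_le T phi r g t s t' HP Hs Hr Hg Ht') as [s2 [Hs2 [Hr2 Hg2]]].
    set (m := inf_R (IS phi t' t)).
    assert (Hm : m <= inf_R (IS g s2 s)).
    { apply inf_IS_ge; [lra|]. intros u Hu.
      pose proof (r_mono T phi r g s2 u HP ltac:(lra) ltac:(lra) ltac:(lra)).
      pose proof (r_mono T phi r g u s HP ltac:(lra) ltac:(lra) ltac:(lra)).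
      destruct (Req_dec (r u) t') as [Ee|Ne].
      - assert (g u = phi (r u)).
        { apply (after_hit T phi r g s2 u HP); try lra. rewrite Hr2. lra. }
        rewrite H1, Ee. apply (inf_IS_le phi t B); auto; lra.
      - set (tau := r u) in *.
        pose proof (between T phi r g u HP ltac:(lra)) as Hb. fold tau in Hb.
        assert (m <= phi tau) by (apply (inf_IS_le phi t B); auto; lra).
        assert (m <= left_val phi tau).
        { apply (lim_ge phi tau t'); [apply lvlim_cad with T; auto; lra | lra |].
          intros sg Hsg. apply (inf_IS_le phi t B); auto; lra. }
        mm. }
    pose proof (Sf_ge a g s B s2 HBg ltac:(lra)).
    assert (TT a phi t' t <= TT a g s2 s) by (unfold TT; rewrite Hg2; fold m; mm).
    lra.
  - apply Sf_le; [lra|]. intros s' Hs'.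
    apply le_epsilon. intros eps Heps.
    set (t' := r s') in *. set (z := g s') in *. set (Mg := inf_R (IS g s' s)) in *.
    assert (Hrt : 0 <= t' <= t).
    { pose proof (r_rng T phi r g s' HP ltac:(lra)). pose proof (r_mono T phi r g s' s HP ltac:(lra) ltac:(lra) ltac:(lra)). unfold t'; lra. }
    assert (HMz : Mg <= z) by (apply (inf_IS_le g s B); auto; lra).
    assert (HTg : TT a g s' s <= Rmin (hh a z) Mg) by (unfold TT; fold z Mg; lra).
    assert (Hlater : forall tau, t' < tau <= t -> Mg <= phi tau).
    { intros tau Htau. destruct (hit_le T phi r g t s tau HP Hs Hr Hg ltac:(lra)) as [u [Hu [Hru Hgu]]].
      assert (s' < u).
      { apply (r_lt T phi r g); auto; try lra. rewrite Hru; unfold t' in Htau; lra. }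
      rewrite <- Hgu. apply (inf_IS_le g s B); auto; lra. }
    destruct (Rle_dec z (phi t')) as [Hzp|Hzp].
    + assert (Rmin z Mg <= inf_R (IS phi t' t)).
      { apply inf_IS_ge; [lra|]. intros tau Htau. destruct (Req_dec tau t') as [->|].
        - mm. - pose proof (Hlater tau ltac:(lra)). mm. }
      pose proof (Sf_ge a phi t B t' HBp Hrt).
      pose proof (hh_mono a z (phi t') Hzp).
      assert (TT a phi t' t >= Rmin (hh a z) Mg) by (unfold TT; mm).
      lra.
    + pose proof (between T phi r g s' HP ltac:(lra)) as Hb. fold t' z in Hb.
      assert (Hz : z <= left_val phi t') by mm.
      assert (Ht0 : t' <> 0).
      { intro E. rewrite E, lv0 in Hz. rewrite E in Hzp. lra. }
      assert (Hpt : Mg <= phi t').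
      { destruct (hit T phi r g t' HP ltac:(lra)) as [s1 [Hs1 [Hr1 Hg1]]].
        assert (s' <= s1).
        { destruct (Rle_dec s' s1); auto. exfalso.
          assert (g s' = phi (r s')) by (apply (after_hit T phi r g s1 s' HP); [lra|lra|lra| rewrite Hr1; unfold t'; reflexivity | rewrite Hr1; exact Hg1]).
          fold t' z in H. lra. }
        destruct (Rle_dec s1 s).
        - rewrite <- Hg1. apply (inf_IS_le g s B); auto; lra.
        - pose proof (r_mono T phi r g s s1 HP ltac:(lra) ltac:(lra) ltac:(lra)).
          replace t' with t by lra. rewrite <- Hg. apply (inf_IS_le g s B); auto; lra. }
      destruct (lvlim_cad T phi t' Hcad ltac:(lra) eps Heps) as [d [Hd Hld]].
      set (t'' := Rmax (t' / 2) (t' - d / 2)).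
      assert (Ht'' : 0 <= t'' < t' /\ t' - d < t'') by (unfold t''; mm).
      pose proof (Hld t'' ltac:(lra)) as Hpt''.
      assert (Rmin (z - eps) Mg <= inf_R (IS phi t'' t)).
      { apply inf_IS_ge; [lra|]. intros tau Htau.
        destruct (Rlt_le_dec tau t').
        - pose proof (Hld tau ltac:(lra)). mm; ab.
        - destruct (Req_dec tau t') as [->|].
          + mm. + pose proof (Hlater tau ltac:(lra)). mm. }
      pose proof (Sf_ge a phi t B t'' HBp ltac:(lra)).
      assert (z - eps <= phi t'') by ab.
      pose proof (hh_mono a (z - eps) (phi t'') H1).
      pose proof (hh_lip a z eps ltac:(lra)).
      assert (TT a phi t'' t >= Rmin (hh a z) Mg - eps) by (unfold TT; mm).
      lra.
Qed.
Lemma r0 T phi r g : in_Pi T phi r g -> r 0 = 0.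
Proof.
  intros HP. pose proof (r_rng T phi r g 0 HP ltac:(lra)).
  destruct (hit T phi r g 0 HP ltac:(lra)) as [s [Hs [Hr _]]].
  pose proof (r_mono T phi r g 0 s HP ltac:(lra) ltac:(lra) ltac:(lra)). lra.
Qed.

Lemma smin T phi r g t : in_Pi T phi r g -> 0 <= t <= T ->
  exists sm, 0 <= sm <= 1 /\ r sm = t /\ forall s, 0 <= s <= 1 -> r s = t -> sm <= s.
Proof.
  intros HP Ht. pose proof (r0 T phi r g HP) as H0.
  destruct (Req_dec t 0) as [->|Htn].
  { exists 0. split; [lra|]. split; auto. intros s Hs _; lra. }
  set (E := fun x => 0 <= x <= 1 /\ r x < t).
  assert (HE : is_lub E (sup_R E)).
  { apply (sup_R_lub E 1). exists 0. split; lra. intros x [Hx _]; lra. }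
  set (c := sup_R E) in *. destruct HE as [Hub Hl].
  destruct (hit T phi r g t HP Ht) as [sh [Hsh [Hrh _]]].
  assert (Hup : forall s, 0 <= s <= 1 -> r s = t -> is_upper_bound E s).
  { intros s Hs Hrs x [Hx Hrx]. left. apply (r_lt T phi r g); auto; lra. }
  assert (Hc0 : 0 <= c) by (apply Hub; split; lra).
  assert (Hcsh : c <= sh) by (apply Hl; apply Hup; auto).
  exists c. split; [lra|]. split.
  - pose proof (r_mono T phi r g c sh HP Hc0 Hcsh ltac:(lra)).
    destruct (Rle_lt_or_eq_dec (r c) t ltac:(lra)) as [Hlt|]; auto. exfalso.
    destruct HP as (Hr & _).
    destruct (Hr c ltac:(lra) (t - r c) ltac:(lra)) as [d [Hd Hdd]].
    destruct (Req_dec c 1).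
    { assert (sh = 1) by lra. subst. rewrite H1 in Hlt. lra. }
    set (x := Rmin 1 (c + d / 2)).
    assert (Hx : c < x <= 1 /\ Rabs (x - c) < d) by (unfold x; mm; ab).
    specialize (Hdd x ltac:(lra) ltac:(lra)).
    assert (E x) by (split; [lra|ab]).
    specialize (Hub x H2). lra.
  - intros s Hs Hrs. apply Hl. apply Hup; auto.
Qed.

Lemma FibL a T phi r g B s1 s2 : in_Pi T phi r g -> Bnd g 1 B -> 0 <= s1 -> s1 <= s2 -> s2 <= 1 ->
  r s1 = r s2 ->
  (left_val phi (r s2) <= phi (r s2) -> Lambda a g s1 <= Lambda a g s2) /\
  (phi (r s2) <= left_val phi (r s2) -> Lambda a g s2 <= Lambda a g s1).
Proof.
  intros HP HB H1 H12 H2 Hr.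
  assert (Hf : forall u, s1 <= u <= s2 -> r u = r s2).
  { intros u Hu. pose proof (r_mono T phi r g s1 u HP); pose proof (r_mono T phi r g u s2 HP). 
    assert (r s1 <= r u) by (apply H; lra). assert (r u <= r s2) by (apply H0; lra). lra. }
  assert (HB2 : Bnd g s2 B) by (eapply Bnd_mono; [eassumption|lra]).
  pose proof (between T phi r g s2 HP ltac:(lra)) as Hb2.
  split; intro Hc.
  - apply (Mono_up a g s1 s2 B HB2 ltac:(lra)). intros u Hu.
    pose proof (fib_ord T phi r g u s2 HP ltac:(lra) ltac:(lra) H2 (Hf u Hu)).
    pose proof (between T phi r g u HP ltac:(lra)). rewrite (Hf u Hu) in *.
    mm; ab.
  - apply (Mono_down a g s1 s2 B HB2 ltac:(lra)). intros u Hu.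
    pose proof (fib_ord T phi r g u s2 HP ltac:(lra) ltac:(lra) H2 (Hf u Hu)).
    pose proof (between T phi r g u HP ltac:(lra)). rewrite (Hf u Hu) in *.
    mm; ab.
Qed.

Lemma Lhit a T phi r g B t s : cadlag T phi -> in_Pi T phi r g -> Bnd g 1 B -> 0 <= t <= T ->
  0 <= s <= 1 -> r s = t -> g s = phi t -> Lambda a phi t = Lambda a g s.
Proof.
  intros. rewrite !Lambda_eq. rewrite (key_I a T phi r g B t s); auto. rewrite H5; reflexivity.
Qed.

Lemma LVL a T phi r g B t sm : cadlag T phi -> in_Pi T phi r g -> Bnd g 1 B -> 0 <= t <= T ->
  0 <= sm <= 1 -> r sm = t -> (forall s, 0 <= s <= 1 -> r s = t -> sm <= s) ->
  left_val (Lambda a phi) t = Lambda a g sm.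
Proof.
  intros Hcad HP HB Ht Hsm Hrsm Hmin.
  destruct (hit T phi r g t HP Ht) as [sh [Hsh [Hrh Hgh]]].
  pose proof (Hmin sh Hsh Hrh) as Hle.
  destruct (Req_dec t 0) as [E0|Hn].
  - rewrite E0 in *. rewrite lv0. rewrite (Lhit a T phi r g B 0 sh); auto.
    destruct (FibL a T phi r g B sm sh HP HB ltac:(lra) Hle ltac:(lra) ltac:(congruence)) as [Hu Hd].
    rewrite Hrh, lv0 in Hu, Hd. pose proof (Hu (Rle_refl _)). pose proof (Hd (Rle_refl _)). lra.
  - assert (HL : is_left_lim (Lambda a phi) t (Lambda a g sm)).
    { intros eps Heps.
      destruct (Lambda_cont a g B (proj1 (proj2 HP)) HB sm Hsm eps Heps) as [e [He Hce]].
      pose proof (r0 T phi r g HP).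
      assert (Hsm0 : 0 < sm) by (destruct (Req_dec sm 0) as [E|]; [rewrite E in Hrsm; lra| lra]).
      set (sg := Rmax 0 (sm - e / 2)).
      assert (Hsg : 0 <= sg < sm /\ sm - e < sg) by (unfold sg; mm).
      assert (Hrsg : r sg < t).
      { pose proof (r_mono T phi r g sg sm HP ltac:(lra) ltac:(lra) ltac:(lra)).
        destruct (Req_dec (r sg) t) as [E|]; [|lra]. pose proof (Hmin sg ltac:(lra) E). lra. }
      pose proof (r_rng T phi r g sg HP ltac:(lra)).
      exists (t - r sg). split; [lra|]. intros t' Ht'.
      destruct (hit T phi r g t' HP ltac:(lra)) as [s1 [Hs1 [Hr1 Hg1]]].
      rewrite (Lhit a T phi r g B t' s1); auto; try lra.
      assert (s1 < sm) by (apply (r_lt T phi r g); auto; lra).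
      assert (sg <= s1).
      { destruct (Rle_dec sg s1); auto. pose proof (r_mono T phi r g s1 sg HP ltac:(lra) ltac:(lra) ltac:(lra)). lra. }
      apply Hce; [lra|]. ab. }
    apply eq_sym, (lim_unique (Lambda a phi) t); auto. apply lv_lim; auto. exists (Lambda a g sm); auto.
Qed.
Theorem lemmaA1 (a T : R) (phi r g : R -> R) :
  a > 0 -> T > 0 -> cadlag T phi -> in_Pi T phi r g ->
  in_Pi T (Lambda a phi) r (Lambda a g).
Proof.
  intros Ha HT Hcad HP.
  pose proof HP as (Hr & Hg & Hin & Hsurj & Hmono).
  destruct (gbound g Hg) as [B HB].
  split; [exact Hr|]. split; [exact (Lambda_cont a g B Hg HB)|]. split; [|split].
  - intros s Hs. set (t := r s).
    pose proof (r_rng T phi r g s HP Hs) as Ht. fold t in Ht.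
    destruct (smin T phi r g t HP Ht) as [sm [Hsm [Hrsm Hmin]]].
    destruct (hit T phi r g t HP Ht) as [sh [Hsh [Hrh Hgh]]].
    pose proof (Hmin s Hs eq_refl) as Hsms.
    set (sh' := Rmax s sh).
    assert (Hsh' : 0 <= sh' <= 1 /\ s <= sh' /\ r sh' = t /\ g sh' = phi t).
    { unfold sh'. unfold Rmax. destruct (Rle_dec s sh); [repeat split; auto; lra|].
      repeat split; auto; try lra. apply (after_hit T phi r g sh s HP); try lra. fold t; congruence. congruence. }
    destruct Hsh' as [Hsh'1 [Hsh'2 [Hsh'3 Hsh'4]]].
    unfold in_G; fold t.
    rewrite (Lhit a T phi r g B t sh') by auto.
    rewrite (LVL a T phi r g B t sm) by auto.
    split; [exact Ht|].
    destruct (FibL a T phi r g B sm s HP HB ltac:(lra) Hsms ltac:(lra) ltac:(rewrite Hrsm; reflexivity)) as [A1 A2].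
    destruct (FibL a T phi r g B s sh' HP HB ltac:(lra) Hsh'2 ltac:(lra) ltac:(rewrite Hsh'3; reflexivity)) as [B1 B2].
    fold t in A1, A2. rewrite Hsh'3 in B1, B2.
    destruct (Rle_dec (left_val phi t) (phi t)) as [Hc|Hc].
    + specialize (A1 Hc). specialize (B1 Hc). mm.
    + specialize (A2 ltac:(lra)). specialize (B2 ltac:(lra)). mm.
  - intros t z [Ht Hz].
    destruct (smin T phi r g t HP Ht) as [sm [Hsm [Hrsm Hmin]]].
    destruct (hit T phi r g t HP Ht) as [sh [Hsh [Hrh Hgh]]].
    pose proof (Hmin sh Hsh Hrh) as Hle.
    rewrite (Lhit a T phi r g B t sh) in Hz by auto.
    rewrite (LVL a T phi r g B t sm) in Hz by auto.
    pose proof (cont_cl _ (Lambda_cont a g B Hg HB)) as Hc.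
    assert (Hc2 : continuity (fun x => Lambda a g (cl x) - z)).
    { apply continuity_minus; auto. apply continuity_const. intros x y; reflexivity. }
    destruct (IVT_cor _ sm sh Hc2 Hle) as [x [Hx Hfx]].
    { rewrite !cl_id by lra. mm; nra. }
    rewrite cl_id in Hfx by lra.
    exists x. split; [lra|]. split; [|lra].
    pose proof (r_mono T phi r g sm x HP ltac:(lra) ltac:(lra) ltac:(lra)).
    pose proof (r_mono T phi r g x sh HP ltac:(lra) ltac:(lra) ltac:(lra)). lra.
  - intros s1 s2 Hs1 Hs2 H12.
    pose proof (r_mono T phi r g s1 s2 HP ltac:(lra) H12 ltac:(lra)).
    destruct (Rle_lt_or_eq_dec _ _ H) as [Hlt|Heq]; [left; auto|right; split; auto].
    set (t := r s1) in *.
    pose proof (r_rng T phi r g s1 HP Hs1) as Ht. fold t in Ht.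
    destruct (smin T phi r g t HP Ht) as [sm [Hsm [Hrsm Hmin]]].
    pose proof (Hmin s1 Hs1 eq_refl) as Hsms.
    rewrite (LVL a T phi r g B t sm) by auto.
    destruct (FibL a T phi r g B sm s1 HP HB ltac:(lra) Hsms ltac:(lra) ltac:(rewrite Hrsm; reflexivity)) as [A1 A2].
    destruct (FibL a T phi r g B s1 s2 HP HB ltac:(lra) H12 ltac:(lra) Heq) as [B1 B2].
    fold t in A1, A2. rewrite <- Heq in B1, B2.
    destruct (Rle_dec (left_val phi t) (phi t)) as [Hc|Hc].
    + specialize (A1 Hc). specialize (B1 Hc). ab.
    + specialize (A2 ltac:(lra)). specialize (B2 ltac:(lra)). ab.
Qed.
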